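(* There exist finite-dimensional Hilbert spaces $\mathcal{H}_1,\mathcal{H}_2$, states $\rho_1$ on $\mathcal{H}_1$ and $\rho_2$ on $\mathcal{H}_2$, a separable observable $A$ on $\mathcal{H}_1\otimes\mathcal{H}_2$, an entangled state $\rho$ on $\mathcal{H}_1\otimes\mathcal{H}_2$, and a real number $\lambda>0$ such that: (1) $\rho$ is a witness of the $\lambda$-lifting $\rho_1\,A^\#\,\rho_2$; and (2) no separable state $\sigma$ on $\mathcal{H}_1\otimes\mathcal{H}_2$ is a witness of the $\lambda$-lifting $\rho_1\,A^\#\,\rho_2$.
   Context: $\rho\in\mathcal{D}^\le(\mathcal{H}_1\otimes\mathcal{H}_2)$ (partial density operators) is a coupling for $\langle\rho_1,\rho_2\rangle$ if $\mathrm{tr}_2(\rho)=\rho_1$ and $\mathrm{tr}_1(\rho)=\rho_2$ (partial traces). For an observable (Hermitian operator) $A$ on $\mathcal{H}_1\otimes\mathcal{H}_2$ and $\lambda>0$, $\rho$ is a witness of the $\lambda$-lifting $\rho_1 A^\#\rho_2$ if $\rho$ is a coupling for $\langle\rho_1,\rho_2\rangle$ and $\mathrm{tr}(A\rho)\ge\lambda$. A positive operator $\rho$ on $\mathcal{H}_1\otimes\mathcal{H}_2$ is separable if $\rho=\sum_m\rho_{m1}\otimes\rho_{m2}$ with each $\rho_{mi}$ a positive operator on $\mathcal{H}_i$; it is entangled if it is not separable. *)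

(* Defs.v *)
From HB Require Import structures.
From mathcomp Require Import all_boot all_order all_algebra.
From mathcomp Require Import complex mxtens.
From mathcomp Require Import Rstruct.
Set Implicit Arguments. Unset Strict Implicit. Unset Printing Implicit Defensive.
Import Order.TTheory GRing.Theory Num.Theory.
Local Open Scope ring_scope.

(* A d-dimensional Hilbert space is C^d; operators on it are 'M[C]_d.
   H1 (x) H2 = C^(d1*d2), with the Kronecker product tensmx (A *t B)
   and index (i,j) |-> mxtens_index (i,j). *)
Definition C : numClosedFieldType := (Rdefinitions.R)[i].

Definition RtoC (x : Rdefinitions.R) : C := Complex x 0.

Definition adjmx {m n} (A : 'M[C]_(m, n)) : 'M[C]_(n, m) := (map_mx Num.conj A)^T.

Definition is_positive {n} (A : 'M[C]_n) : Prop :=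
  forall v : 'cV[C]_n, 0 <= (adjmx v *m A *m v) 0 0.

Definition is_observable {n} (A : 'M[C]_n) : Prop := adjmx A = A.

Definition is_state {n} (rho : 'M[C]_n) : Prop := is_positive rho /\ \tr rho = 1.

Definition is_pdo {n} (rho : 'M[C]_n) : Prop := is_positive rho /\ \tr rho <= 1.

Definition ptrace2 {d1 d2} (rho : 'M[C]_(d1 * d2)) : 'M[C]_d1 :=
  \matrix_(i, j) \sum_(k < d2) rho (mxtens_index (i, k)) (mxtens_index (j, k)).
Definition ptrace1 {d1 d2} (rho : 'M[C]_(d1 * d2)) : 'M[C]_d2 :=
  \matrix_(i, j) \sum_(k < d1) rho (mxtens_index (k, i)) (mxtens_index (k, j)).

Definition is_coupling {d1 d2} (rho1 : 'M[C]_d1) (rho2 : 'M[C]_d2)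
  (rho : 'M[C]_(d1 * d2)) : Prop :=
  is_pdo rho /\ ptrace2 rho = rho1 /\ ptrace1 rho = rho2.

Definition lifting_witness {d1 d2} (lam : Rdefinitions.R) (rho1 : 'M[C]_d1)
  (A : 'M[C]_(d1 * d2)) (rho2 : 'M[C]_d2) (rho : 'M[C]_(d1 * d2)) : Prop :=
  is_coupling rho1 rho2 rho /\ RtoC lam <= \tr (A *m rho).

Definition is_separable {d1 d2} (rho : 'M[C]_(d1 * d2)) : Prop :=
  is_positive rho /\
  exists (k : nat) (f1 : 'I_k -> 'M[C]_d1) (f2 : 'I_k -> 'M[C]_d2),
    (forall m, is_positive (f1 m) /\ is_positive (f2 m)) /\
    rho = \sum_(m < k) (f1 m *t f2 m).

Definition is_entangled {d1 d2} (rho : 'M[C]_(d1 * d2)) : Prop :=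
  is_positive rho /\ ~ is_separable rho.

(* Main.v *)
Require Import Defs.
From HB Require Import structures.
From mathcomp Require Import all_boot all_order all_algebra.
From mathcomp Require Import complex mxtens.
From mathcomp Require Import Rstruct.
From mathcomp Require Import ring lra.
Import Order.TTheory GRing.Theory Num.Theory.
Local Open Scope ring_scope.
Definition RR := Rdefinitions.R.
Definition ReC (z : C) : RR := complex.Re z.

Lemma RtoCD (x y : RR) : RtoC x + RtoC y = RtoC (x + y).
Proof. rewrite /RtoC; congr Complex; ring. Qed.
Lemma RtoCM (x y : RR) : RtoC x * RtoC y = RtoC (x * y).
Proof. rewrite /RtoC; congr Complex; ring. Qed.
Lemma RtoC_conj (x : RR) : Num.conj (RtoC x) = RtoC x.
Proof. rewrite /RtoC; congr Complex; ring. Qed.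
Lemma RtoC_le (x y : RR) : (RtoC x <= RtoC y) = (x <= y).
Proof. by rewrite /RtoC lecE /= eqxx. Qed.
Lemma le_Re (x : RR) (z : C) : RtoC x <= z -> x <= ReC z.
Proof. case: z => a b. rewrite /RtoC lecE /=. by case/andP. Qed.
Lemma ge0_Re (z : C) : 0 <= z -> z = RtoC (ReC z) /\ 0 <= ReC z.
Proof. case: z => a b. rewrite lecE /=. by case/andP => /eqP -> ->. Qed.
Lemma ReC_RtoC x : ReC (RtoC x) = x. Proof. by []. Qed.
Lemma ReCD x y : ReC (x + y) = ReC x + ReC y.
Proof. by case: x => a b; case: y => c d. Qed.
Lemma ReC0 : ReC 0 = 0. Proof. by []. Qed.
Lemma ReC_sum n (F : 'I_n -> C) : ReC (\sum_(i < n) F i) = \sum_(i < n) ReC (F i).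
Proof.
elim: n F => [|n IH] F; first by rewrite !big_ord0.
by rewrite !big_ord_recr /= ReCD IH.
Qed.
Lemma RtoC0 : RtoC 0 = 0. Proof. by []. Qed.
Lemma RtoC1 : RtoC 1 = 1. Proof. by []. Qed.

Definition i0 : 'I_2 := @Ordinal 2 0 isT.
Definition i1 : 'I_2 := @Ordinal 2 1 isT.
Lemma sum2 (V : nmodType) (F : 'I_2 -> V) : \sum_i F i = F i0 + F i1.
Proof. rewrite big_ord_recl big_ord1; congr (F _ + F _); exact: val_inj. Qed.
Lemma ord2P (i : 'I_2) : i = i0 \/ i = i1.
Proof. case: i => [[|[|k]]] Hk; [left|right|by []]; exact: val_inj. Qed.
Definition j0 : 'I_4 := @Ordinal 4 0 isT.
Definition j1 : 'I_4 := @Ordinal 4 1 isT.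
Definition j2 : 'I_4 := @Ordinal 4 2 isT.
Definition j3 : 'I_4 := @Ordinal 4 3 isT.
Lemma sum4 (V : nmodType) (F : 'I_4 -> V) : \sum_i F i = F j0 + F j1 + F j2 + F j3.
Proof.
rewrite !big_ord_recr big_ord0 /= add0r.
by congr (F _ + F _ + F _ + F _); apply: val_inj.
Qed.
Lemma sum1 (V : nmodType) (F : 'I_1 -> V) : \sum_i F i = F 0.
Proof. by rewrite big_ord1. Qed.

Lemma adjmxM m n p (X : 'M[C]_(m,n)) (Y : 'M[C]_(n,p)) :
  adjmx (X *m Y) = adjmx Y *m adjmx X.
Proof. by rewrite /adjmx map_mxM trmx_mul. Qed.
Lemma adjmxK m n (X : 'M[C]_(m,n)) : adjmx (adjmx X) = X.
Proof. by apply/matrixP => i j; rewrite !mxE conjCK. Qed.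
Lemma adjmx_tens m n p q (X : 'M[C]_(m,n)) (Y : 'M[C]_(p,q)) :
  adjmx (X *t Y) = adjmx X *t adjmx Y.
Proof. by apply/matrixP => i j; rewrite !mxE rmorphM. Qed.
Lemma adjmxD m n (X Y : 'M[C]_(m,n)) : adjmx (X + Y) = adjmx X + adjmx Y.
Proof. by apply/matrixP => i j; rewrite !mxE rmorphD. Qed.
Lemma adjmx0 m n : adjmx (0 : 'M[C]_(m,n)) = 0.
Proof. by apply/matrixP => i j; rewrite !mxE rmorph0. Qed.
Lemma adjmx_sum m n k (F : 'I_k -> 'M[C]_(m,n)) :
  adjmx (\sum_(i < k) F i) = \sum_(i < k) adjmx (F i).
Proof.
elim: k F => [|k IH] F; first by rewrite !big_ord0 adjmx0.
by rewrite !big_ord_recr /= adjmxD IH.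
Qed.

Definition proj {n k} (X : 'M[C]_(n,k)) : 'M[C]_n := X *m adjmx X.

Lemma pos_proj n k (X : 'M[C]_(n,k)) : is_positive (proj X).
Proof.
move=> v; rewrite /proj.
set w := adjmx v *m X.
have -> : adjmx v *m (X *m adjmx X) *m v = w *m adjmx w.
  by rewrite /w adjmxM adjmxK !mulmxA.
rewrite !mxE; apply: sumr_ge0 => j _; rewrite !mxE; exact: mul_conjC_ge0.
Qed.

Lemma pos_add n (X Y : 'M[C]_n) : is_positive X -> is_positive Y -> is_positive (X + Y).
Proof.
move=> hX hY v; rewrite mulmxDr mulmxDl mxE; exact: addr_ge0.
Qed.
Lemma pos_0 n : is_positive (0 : 'M[C]_n).
Proof. by move=> v; rewrite mulmx0 mul0mx mxE. Qed.
Lemma pos_sum n k (F : 'I_k -> 'M[C]_n) :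
  (forall i, is_positive (F i)) -> is_positive (\sum_(i < k) F i).
Proof.
move=> h; elim: k F h => [|k IH] F h; first by rewrite big_ord0; exact: pos_0.
rewrite big_ord_recr /=; apply: pos_add => //; exact: IH.
Qed.
Lemma pos_scale n (c : C) (X : 'M[C]_n) : 0 <= c -> is_positive X -> is_positive (c *: X).
Proof.
move=> hc hX v; rewrite -scalemxAr -scalemxAl mxE; exact: mulr_ge0.
Qed.

Lemma proj_tens m n k l (X : 'M[C]_(m,k)) (Y : 'M[C]_(n,l)) :
  proj X *t proj Y = proj (X *t Y).
Proof. by rewrite /proj adjmx_tens tensmx_mul. Qed.

Lemma tr_tens m n (X : 'M[C]_m) (Y : 'M[C]_n) : \tr (X *t Y) = \tr X * \tr Y.
Proof. rewrite /mxtrace mulr_sum; apply: eq_bigr => i _; by rewrite mxE. Qed.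

Lemma tr_tensmul m n (X Z : 'M[C]_m) (Y W : 'M[C]_n) :
  \tr ((X *t Y) *m (Z *t W)) = \tr (X *m Z) * \tr (Y *m W).
Proof. by rewrite tensmx_mul tr_tens. Qed.

Definition cv (x y : C) : 'cV[C]_2 := \col_i (if val i == 0%N then x else y).

Lemma trproj (x y : C) (M : 'M[C]_2) :
  \tr (proj (cv x y) *m M) = Num.conj x * x * M i0 i0 + Num.conj x * y * M i0 i1
     + Num.conj y * x * M i1 i0 + Num.conj y * y * M i1 i1.
Proof.
rewrite /mxtrace sum2 !mxE !sum2 !mxE !sum1 !mxE /=; ring.
Qed.

Lemma quadform (x y : C) (M : 'M[C]_2) :
  (adjmx (cv x y) *m M *m cv x y) 0 0 = Num.conj x * x * M i0 i0 + Num.conj x * y * M i0 i1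
     + Num.conj y * x * M i1 i0 + Num.conj y * y * M i1 i1.
Proof.
rewrite !mxE !sum2 !mxE !sum2 !mxE /=; ring.
Qed.

Lemma quadR (s t : RR) (M : 'M[C]_2) :
  (adjmx (cv (RtoC s) (RtoC t)) *m M *m cv (RtoC s) (RtoC t)) 0 0 =
  RtoC (s * s) * M i0 i0 + RtoC (s * t) * (M i0 i1 + M i1 i0) + RtoC (t * t) * M i1 i1.
Proof. rewrite quadform !RtoC_conj -!RtoCM; ring. Qed.

Ltac simpR := rewrite ?(mulr0, mul0r, mulr1, mul1r, addr0, add0r, RtoC0, RtoC1).

Lemma decomp (P : 'M[C]_2) : is_positive P ->
  exists a b g : RR, [/\ P i0 i0 = RtoC a, P i1 i1 = RtoC b,
     P i0 i1 + P i1 i0 = RtoC g, 0 <= a /\ 0 <= b & g * g <= 4 * a * b].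
Proof.
move=> hP.
have h00 := hP (cv (RtoC 1) (RtoC 0)); rewrite quadR in h00; simpR; move: h00; simpR => h00.
have h11 := hP (cv (RtoC 0) (RtoC 1)); rewrite quadR in h11; move: h11; simpR => h11.
have [e00 a0] := ge0_Re _ h00.
have [e11 b0] := ge0_Re _ h11.
set a := ReC (P i0 i0) in e00 a0; set b := ReC (P i1 i1) in e11 b0.
have h01 := hP (cv (RtoC 1) (RtoC 1)); rewrite quadR in h01; move: h01; simpR => h01.
have eg : P i0 i1 + P i1 i0 = RtoC (ReC (P i0 i1 + P i1 i0) ).
  move: h01; rewrite e00 e11.
  case: (P i0 i1 + P i1 i0) => c d.
  rewrite /RtoC lecE /= addr0 add0r => /andP [/eqP -> _] //.
set g := ReC _ in eg.
have hq : forall s t : RR, 0 <= s * s * a + s * t * g + t * t * b.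
  move=> s t; have := hP (cv (RtoC s) (RtoC t)).
  by rewrite quadR e00 e11 eg !RtoCM !RtoCD -RtoC0 RtoC_le; lra.
exists a, b, g; split => //.
have h1 := hq (- g) (2 * a).
have h2 := hq (2 * b) (- g).
have h3 := hq 1 (- g).
have [ha|ha] : a = 0 \/ 0 < a by lra.
  have [hb|hb] : b = 0 \/ 0 < b by lra.
    subst; nra.
  have : 0 <= b * (4 * a * b - g * g) by nra.
  rewrite pmulr_rge0 //; lra.
have : 0 <= a * (4 * a * b - g * g) by nra.
rewrite pmulr_rge0 //; lra.
Qed.

Lemma trprojR (s t : RR) (M : 'M[C]_2) :
  \tr (proj (cv (RtoC s) (RtoC t)) *m M) =
  RtoC (s * s) * M i0 i0 + RtoC (s * t) * (M i0 i1 + M i1 i0) + RtoC (t * t) * M i1 i1.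
Proof. rewrite trproj !RtoC_conj -!RtoCM; ring. Qed.

Lemma tr_sum n k (F : 'I_k -> 'M[C]_n) : \tr (\sum_(i < k) F i) = \sum_(i < k) \tr (F i).
Proof.
elim: k F => [|k IH] F; first by rewrite !big_ord0 mxtrace0.
by rewrite !big_ord_recr /= mxtraceD IH.
Qed.

Definition uA (m : 'I_4) : 'cV[C]_2 :=
  match val m with
  | 0%N => cv (RtoC 2) (RtoC 0)
  | 1%N => cv (RtoC 0) (RtoC 2)
  | 2%N => cv (RtoC 1) (RtoC 1)
  | _ => cv (RtoC 1) (RtoC (-1))
  end.
Definition wA (m : 'I_4) : 'cV[C]_2 :=
  match val m with
  | 0%N => cv (RtoC 1) (RtoC 0)
  | 1%N => cv (RtoC 0) (RtoC 1)
  | 2%N => cv (RtoC 1) (RtoC 1)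
  | _ => cv (RtoC 1) (RtoC (-1))
  end.

Definition Aop : 'M[C]_(2 * 2) := \sum_(m < 4) (proj (uA m) *t proj (wA m)).

Lemma real_ineq (a b g a' b' g' : RR) : 0 <= a -> 0 <= b -> 0 <= a' -> 0 <= b' ->
  g * g <= 4 * a * b -> g' * g' <= 4 * a' * b' ->
  4 * a * a' + 4 * b * b' + (a + g + b) * (a' + g' + b') + (a - g + b) * (a' - g' + b')
   <= 6 * ((a + b) * (a' + b')).
Proof.
move=> ha hb ha' hb' hg hg'.
suff : g * g' <= 2 * (a * b' + a' * b) by lra.
have hS : 0 <= 2 * (a * b' + a' * b) by nra.
have h1 : (g * g') * (g * g') <= (4 * a * b) * (4 * a' * b').
  have -> : (g * g') * (g * g') = (g * g) * (g' * g') by ring.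
  apply: ler_pM => //; nra.
have h2 : (4 * a * b) * (4 * a' * b') <= (2 * (a * b' + a' * b)) * (2 * (a * b' + a' * b)).
  have := sqr_ge0 (a * b' - a' * b); rewrite expr2 => hh.
  have -> : (2 * (a * b' + a' * b)) * (2 * (a * b' + a' * b)) =
    (4 * a * b) * (4 * a' * b') + 4 * ((a * b' - a' * b) * (a * b' - a' * b)) by ring.
  lra.
rewrite leNgt; apply/negP => hlt.
have : (2 * (a * b' + a' * b)) * (2 * (a * b' + a' * b)) < (g * g') * (g * g').
  apply: (le_lt_trans (y := (2 * (a * b' + a' * b)) * (g * g'))).
    by apply: ler_wpM2l => //; exact: ltW.
  have hp : 0 < g * g' by exact: le_lt_trans hS hlt.
  by rewrite ltr_pM2r.
lra.
Qed.

Lemma sep_term (P Q : 'M[C]_2) : is_positive P -> is_positive Q ->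
  ReC (\tr (Aop *m (P *t Q))) <= 6 * ReC (\tr (P *t Q)).
Proof.
move=> /decomp [a [b [g [ea eb eg [ha hb] hg]]]].
move=> /decomp [a' [b' [g' [ea' eb' eg' [ha' hb'] hg']]]].
rewrite /Aop mulmx_suml tr_sum sum4 !tr_tensmul tr_tens /uA /wA /=.
rewrite !trprojR /mxtrace !sum2 ea eb eg ea' eb' eg' !(RtoCM, RtoCD) !ReC_RtoC.
have := @real_ineq a b g a' b' g' ha hb ha' hb' hg hg'.
move=> h; lra.
Qed.

Lemma sep_bound (s : 'M[C]_(2 * 2)) : is_separable s ->
  ReC (\tr (Aop *m s)) <= 6 * ReC (\tr s).
Proof.
case=> _ [k [f1 [f2 [hf ->]]]].
rewrite mulmx_sumr !tr_sum !ReC_sum mulr_sumr.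
apply: ler_sum => m _; case: (hf m) => h1 h2; exact: sep_term.
Qed.

Lemma adjmx_proj n k (X : 'M[C]_(n,k)) : adjmx (proj X) = proj X.
Proof. by rewrite /proj adjmxM adjmxK. Qed.

Lemma Aop_obs : is_observable Aop.
Proof.
rewrite /is_observable /Aop adjmx_sum; apply: eq_bigr => m _.
by rewrite adjmx_tens !adjmx_proj.
Qed.

Lemma Aop_sep : is_separable Aop.
Proof.
split.
  rewrite /Aop; apply: pos_sum => m; rewrite proj_tens; exact: pos_proj.
exists 4%N, (fun m => proj (uA m)), (fun m => proj (wA m)); split => //.
move=> m; split; exact: pos_proj.
Qed.

Definition rhoE : 'M[C]_(2 * 2) :=
  RtoC (1/2) *: \sum_(a < 2) \sum_(b < 2) ((delta_mx a b : 'M[C]_2) *t (delta_mx a b : 'M[C]_2)).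

Definition phi : 'M[C]_(2 * 2, 1 * 1) :=
  \sum_(a < 2) ((delta_mx a 0 : 'cV[C]_2) *t (delta_mx a 0 : 'cV[C]_2)).

Lemma adjmx_delta m n (i : 'I_m) (j : 'I_n) : adjmx (delta_mx i j : 'M[C]_(m,n)) = delta_mx j i.
Proof. by apply/matrixP => a b; rewrite !mxE rmorph_nat andbC. Qed.

Lemma rhoE_proj : rhoE = RtoC (1/2) *: proj phi.
Proof.
rewrite /rhoE /proj /phi adjmx_sum mulmx_suml; congr (_ *: _).
apply: eq_bigr => a _; rewrite mulmx_sumr; apply: eq_bigr => b _.
by rewrite adjmx_tens !adjmx_delta tensmx_mul mul_delta_mx.
Qed.

Lemma half_ge0 : 0 <= RtoC (1/2).
Proof. rewrite -RtoC0 RtoC_le; lra. Qed.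

Lemma rhoE_pos : is_positive rhoE.
Proof. rewrite rhoE_proj; apply: pos_scale; [exact: half_ge0 | exact: pos_proj]. Qed.

Lemma rhoE_tr : \tr rhoE = 1.
Proof.
rewrite /rhoE mxtraceZ !sum2 !mxtraceD !tr_tens /mxtrace !sum2 !mxE /=.
simpR; rewrite -RtoC1 RtoCD RtoCM; congr RtoC; lra.
Qed.

Definition rho1 : 'M[C]_2 := RtoC (1/2) *: 1%:M.

Lemma ptr2 : ptrace2 rhoE = rho1.
Proof.
apply/matrixP => i j; rewrite /ptrace2 /rho1 !mxE sum2 /rhoE !mxE !sum2 ?mxE ?mxtens_indexK ?mxE /=.
by case: (ord2P i) => ->; case: (ord2P j) => -> /=; simpR.
Qed.

Lemma ptr1 : ptrace1 rhoE = rho1.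
Proof.
apply/matrixP => i j; rewrite /ptrace1 /rho1 !mxE sum2 /rhoE !mxE !sum2 ?mxE ?mxtens_indexK ?mxE /=.
by case: (ord2P i) => ->; case: (ord2P j) => -> /=; simpR.
Qed.

Lemma rho1_state : is_state rho1.
Proof.
split.
  rewrite /rho1; apply: pos_scale; first exact: half_ge0.
  move=> v; rewrite mulmx1 mxE; apply: sumr_ge0 => k _; rewrite !mxE mulrC; exact: mul_conjC_ge0.
rewrite /rho1 mxtraceZ mxtrace1 -RtoC1.
have -> : (2%:R : C) = RtoC 2 by rewrite mulr2n -RtoC1 RtoCD.
by rewrite RtoCM; congr RtoC; lra.
Qed.

Definition sel (s t : RR) (a : 'I_2) : RR := if val a == 0%N then s else t.

Lemma trproj_delta (s t : RR) (a b : 'I_2) :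
  \tr (proj (cv (RtoC s) (RtoC t)) *m delta_mx a b) = RtoC (sel s t a * sel s t b).
Proof.
rewrite trproj !mxE !RtoC_conj.
by case: (ord2P a) => ->; case: (ord2P b) => -> /=; simpR; rewrite RtoCM.
Qed.

Lemma term_rho m n (X : 'M[C]_m) (Y : 'M[C]_n) (F : 'I_2 -> 'I_2 -> 'M[C]_m) (G : 'I_2 -> 'I_2 -> 'M[C]_n) :
  \tr ((X *t Y) *m \sum_(a < 2) \sum_(b < 2) (F a b *t G a b)) =
  \sum_(a < 2) \sum_(b < 2) (\tr (X *m F a b) * \tr (Y *m G a b)).
Proof.
rewrite mulmx_sumr tr_sum; apply: eq_bigr => a _.
rewrite mulmx_sumr tr_sum; apply: eq_bigr => b _.
exact: tr_tensmul.
Qed.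

Lemma sum2C (F : 'I_2 -> C) : \sum_i F i = F i0 + F i1.
Proof. exact: sum2. Qed.

Lemma term_val (s t s' t' : RR) :
  \sum_(a < 2) \sum_(b < 2) (\tr (proj (cv (RtoC s) (RtoC t)) *m delta_mx a b) *
      \tr (proj (cv (RtoC s') (RtoC t')) *m delta_mx a b)) = RtoC ((s * s' + t * t') * (s * s' + t * t')).
Proof.
rewrite !sum2C.
rewrite !trproj_delta.
rewrite /sel /=.
rewrite !(RtoCM, RtoCD).
apply: (congr1 RtoC).
ring.
Qed.

Lemma Arho : \tr (Aop *m rhoE) = RtoC 8.
Proof.
rewrite /Aop /rhoE -scalemxAr mxtraceZ mulmx_suml tr_sum sum4 !term_rho.
have -> : uA j0 = cv (RtoC 2) (RtoC 0) by [].
have -> : uA j1 = cv (RtoC 0) (RtoC 2) by [].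
have -> : uA j2 = cv (RtoC 1) (RtoC 1) by [].
have -> : uA j3 = cv (RtoC 1) (RtoC (-1)) by [].
have -> : wA j0 = cv (RtoC 1) (RtoC 0) by [].
have -> : wA j1 = cv (RtoC 0) (RtoC 1) by [].
have -> : wA j2 = cv (RtoC 1) (RtoC 1) by [].
have -> : wA j3 = cv (RtoC 1) (RtoC (-1)) by [].
rewrite !term_val !(RtoCM, RtoCD).
apply: (congr1 RtoC); lra.
Qed.

Theorem proposition3p10 :
  exists (d1 d2 : nat) (rho1 : 'M[C]_d1) (rho2 : 'M[C]_d2)
         (A : 'M[C]_(d1 * d2)) (rho : 'M[C]_(d1 * d2)) (lam : Rdefinitions.R),
    is_state rho1 /\ is_state rho2 /\
    is_observable A /\ is_separable A /\
    is_state rho /\ is_entangled rho /\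
    0 < lam /\
    lifting_witness lam rho1 A rho2 rho /\
    (forall sigma : 'M[C]_(d1 * d2),
        is_state sigma -> is_separable sigma ->
        ~ lifting_witness lam rho1 A rho2 sigma).
Proof.
exists 2%N, 2%N, rho1, rho1, Aop, rhoE, 8.
have hR1 : ReC 1 = 1 by [].
split; first exact: rho1_state.
split; first exact: rho1_state.
split; first exact: Aop_obs.
split; first exact: Aop_sep.
split; first by split; [exact: rhoE_pos | exact: rhoE_tr].
split.
  split; first exact: rhoE_pos.
  move=> hs; have := sep_bound _ hs; rewrite Arho rhoE_tr ReC_RtoC hR1; lra.
split; first lra.
split.
  split; last by rewrite Arho.
  split; last by split; [exact: ptr2 | exact: ptr1].
  by split; [exact: rhoE_pos | rewrite rhoE_tr].
move=> sigma [_ htr] hsep [_ hle].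
have := sep_bound _ hsep; have := le_Re _ _ hle; rewrite htr hR1; lra.
Qed.
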